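(* Let $k$ be a field and $L$ a Lie $k$-algebra. Every $k$-involution $*$ on $L$ extends to a $k$-involution of the division ring $\mathfrak{D}(L)$ that restricts, on $U(L)\subseteq \mathfrak{D}(L)$, to the unique $k$-involution of $U(L)$ extending $*$. In particular, the principal involution $x\mapsto -x$ of $L$ extends to a $k$-involution of $\mathfrak{D}(L)$.
   Context: A $k$-involution of an associative $k$-algebra $R$ is a $k$-linear map $*:R\to R$ with $(xy)^*=y^*x^*$ and $x^{**}=x$. A $k$-involution of a Lie $k$-algebra $L$ is a $k$-linear map $*:L\to L$ with $[x,y]^*=[y^*,x^*]$ and $x^{**}=x$; the principal involution is $x\mapsto -x$. Any $k$-involution of $L$ extends uniquely to a $k$-involution of the universal enveloping algebra $U(L)$. Lichtman's division ring $\mathfrak{D}(L)$: let $F_i=0$ for $i>0$, $F_0=k$, and for $n>0$ let $F_{-n}$ be the subspace of $U(L)$ spanned by products of at most $n$ elements of $L$; put $\vartheta(f)=\sup\{i: f\in F_i\}$. Extend $\vartheta$ to the Laurent polynomial ring $U(L)[t,t^{-1}]$ ($t$ central) by $\vartheta(\sum_i t^if_i)=\min_i\{\vartheta(f_i)+i\}$. Let $T=\{h: \vartheta(h)\ge 0\}$, $\mathcal U=T\setminus tT$, $T_n=T/t^nT$, $\mathcal U_n$ the image of $\mathcal U$ in $T_n$ (a regular Ore set), $S_n=\mathcal U_n^{-1}T_n$, $S=\varprojlim S_n$, and $D=\mathcal C^{-1}S$ with $\mathcal C=\{1,t,t^2,\dots\}$. Then $D$ is a division ring containing $U(L)[t,t^{-1}]$,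 and $\mathfrak{D}(L)$ is the division subring of $D$ generated by $U(L)$. If $U(L)$ is an Ore domain, $\mathfrak{D}(L)$ is its Ore division ring of fractions. *)

(* Defs.v *)
From HB Require Import structures.
From mathcomp Require Import all_boot all_order all_algebra.
Set Implicit Arguments. Unset Strict Implicit. Unset Printing Implicit Defensive.
Import GRing.Theory.
Local Open Scope ring_scope.

Definition is_lie_bracket (k : fieldType) (L : lmodType k) (br : L -> L -> L) : Prop :=
  [/\ (forall (a : k) (x y z : L), br (a *: x + y) z = a *: br x z + br y z),
      (forall (a : k) (x y z : L), br z (a *: x + y) = a *: br z x + br z y),
      (forall x : L, br x x = 0) &
      (forall x y z : L, br x (br y z) + br y (br z x) + br z (br x y) = 0)].

Definition klinear (k : fieldType) (V W : lmodType k) (f : V -> W) : Prop :=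
  forall (a : k) (x y : V), f (a *: x + y) = a *: f x + f y.

Definition lie_involution (k : fieldType) (L : lmodType k) (br : L -> L -> L)
    (s : L -> L) : Prop :=
  [/\ klinear s,
      (forall x y, s (br x y) = br (s y) (s x)) &
      (forall x, s (s x) = x)].

Definition alg_involution (k : fieldType) (A : algType k) (s : A -> A) : Prop :=
  [/\ klinear s,
      (forall x y, s (x * y) = s y * s x) &
      (forall x, s (s x) = x)].

Definition lie_map (k : fieldType) (L : lmodType k) (br : L -> L -> L)
    (A : algType k) (f : L -> A) : Prop :=
  klinear f /\ forall x y, f (br x y) = f x * f y - f y * f x.

Definition alg_hom (k : fieldType) (A B : algType k) (g : A -> B) : Prop :=
  [/\ klinear g, (forall x y, g (x * y) = g x * g y) & g 1 = 1].

Definition is_UEA (k : fieldType) (L : lmodType k) (br : L -> L -> L)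
    (U : algType k) (iota : L -> U) : Prop :=
  lie_map br iota /\
  forall (A : algType k) (f : L -> A), lie_map br f ->
    (exists g : U -> A, alg_hom g /\ forall x, g (iota x) = f x) /\
    (forall g1 g2 : U -> A, alg_hom g1 -> alg_hom g2 ->
       (forall x, g1 (iota x) = f x) -> (forall x, g2 (iota x) = f x) ->
       forall u, g1 u = g2 u).

(* filt iota n u  <->  u lies in F_{-n}: the k-span of the products of at most
   n elements of iota(L) (the empty product being 1, so F_0 = k). *)
Definition filt (k : fieldType) (L : lmodType k) (U : algType k) (iota : L -> U)
    (n : nat) (u : U) : Prop :=
  exists r : seq (k * seq L),
    all (fun p => (size p.2 <= n)%N) r /\
    u = \sum_(p <- r) p.1 *: \prod_(x <- p.2) iota x.

(* T = { h in U[t,t^-1] : vartheta(h) >= 0 }.  Such h has no negative powers of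
   t, so T is represented inside U[t] = {poly U} (t = 'X, central):
   sum_i t^i f_i lies in T iff f_i in F_{-i} for all i. *)
Definition inT (k : fieldType) (L : lmodType k) (U : algType k) (iota : L -> U)
    (p : {poly U}) : Prop :=
  forall i : nat, filt iota i p`_i.

Definition in_tnT (k : fieldType) (L : lmodType k) (U : algType k) (iota : L -> U)
    (n : nat) (p : {poly U}) : Prop :=
  exists q, inT iota q /\ p = 'X ^+ n * q.

Definition in_calU (k : fieldType) (L : lmodType k) (U : algType k) (iota : L -> U)
    (p : {poly U}) : Prop :=
  inT iota p /\ ~ in_tnT iota 1 p.

Definition is_inv (R : pzRingType) (x : R) : Prop :=
  exists y : R, y * x = 1 /\ x * y = 1.

(* phi : T -> Sn is (the composite T -> T_n -> S_n of the projection with) the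
   left Ore localization S_n = calU_n^{-1} T_n: a ring homomorphism on T whose
   kernel is t^n T, inverting calU, and every element of Sn is u^{-1} r. *)
Definition is_Ore_loc_Tn (k : fieldType) (L : lmodType k) (U : algType k)
    (iota : L -> U) (n : nat) (Sn : pzRingType) (phi : {poly U} -> Sn) : Prop :=
  (forall p q, inT iota p -> inT iota q -> phi (p + q) = phi p + phi q) /\
  (forall p q, inT iota p -> inT iota q -> phi (p * q) = phi p * phi q) /\
  phi 1 = 1 /\
  (forall p, inT iota p -> (phi p = 0 <-> in_tnT iota n p)) /\
  (forall u, in_calU iota u -> is_inv (phi u)) /\
  (forall x : Sn, exists u r, [/\ in_calU iota u, inT iota r & phi u * x = phi r]).

Definition ring_hom (R S : pzRingType) (f : R -> S) : Prop :=
  [/\ (forall x y, f (x + y) = f x + f y), (forall x y, f (x * y) = f x * f y) & f 1 = 1].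

(* All data of the construction of D and D(L), characterised by their defining
   (universal) properties:
   - phi n : T -> S_n  the Ore localizations S_n = calU_n^{-1} T_n,
   - rho n : S_{n+1} -> S_n  the induced transition maps,
   - (S, pi) = inverse limit of the S_n, theta : T -> S the induced map,
   - j : S -> D the localization D = C^{-1} S at C = {1, t, t^2, ...},
   - eps : U(L) -> D the resulting embedding (u = t^{-n} (t^n u)). *)
Definition lichtman_data (k : fieldType) (L : lmodType k) (U : algType k)
    (iota : L -> U) (Sn : nat -> pzRingType) (phi : forall n, {poly U} -> Sn n)
    (rho : forall n, Sn n.+1 -> Sn n) (S : pzRingType) (pi : forall n, S -> Sn n)
    (theta : {poly U} -> S) (D : unitRingType) (j : S -> D) (eps : U -> D) : Prop :=
  (forall n, is_Ore_loc_Tn iota n (phi n)) /\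
      (forall n, ring_hom (rho n) /\
                 forall p, inT iota p -> rho n (phi n.+1 p) = phi n p) /\
      (forall n, ring_hom (pi n) /\ forall s, rho n (pi n.+1 s) = pi n s) /\
      (forall x : forall n, Sn n, (forall n, rho n (x n.+1) = x n) ->
         exists s, (forall n, pi n s = x n) /\
                   forall s', (forall n, pi n s' = x n) -> s' = s) /\
      (forall n p, inT iota p -> pi n (theta p) = phi n p) /\
      (ring_hom j /\ injective j /\ (j (theta 'X)) \is a GRing.unit /\
         forall d : D, exists m s, (j (theta 'X)) ^+ m * d = j s) /\
      (forall (u : U) (n : nat), filt iota n u ->
         eps u * (j (theta 'X)) ^+ n = j (theta ('X ^+ n * polyC u))).

Definition gen_divring (D : unitRingType) (X : D -> Prop) (d : D) : Prop :=
  forall P : D -> Prop,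
    (forall x, X x -> P x) -> P 1 ->
    (forall x y, P x -> P y -> P (x - y)) ->
    (forall x y, P x -> P y -> P (x * y)) ->
    (forall x, P x -> P x^-1) -> P d.

(* sigma : D -> D restricts to a k-involution of the subring DL of D, where the
   k-structure of D comes from k -> U(L) -> D via eps. *)
Definition divring_involution (k : fieldType) (U : algType k) (D : unitRingType)
    (eps : U -> D) (DL : D -> Prop) (sigma : D -> D) : Prop :=
  [/\ (forall x, DL x -> DL (sigma x)),
      (forall x y, DL x -> DL y -> sigma (x + y) = sigma x + sigma y),
      (forall (a : k) x, DL x -> sigma (eps (a%:A) * x) = eps (a%:A) * sigma x),
      (forall x y, DL x -> DL y -> sigma (x * y) = sigma y * sigma x) &
      (forall x, DL x -> sigma (sigma x) = x)].

(* Main.v *)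
Require Import Defs.
From HB Require Import structures.
From mathcomp Require Import all_boot all_order all_algebra.
From mathcomp Require Import boolp.
Import GRing.Theory.
Local Open Scope ring_scope.
Set Implicit Arguments. Unset Strict Implicit. Unset Printing Implicit Defensive.

Section Filt.
Variables (k : fieldType) (L : lmodType k) (U : algType k) (iota : L -> U).

Lemma filt0 n : filt iota n 0.
Proof. by exists [::]; rewrite big_nil. Qed.

Lemma filtD n u v : filt iota n u -> filt iota n v -> filt iota n (u + v).
Proof.
move=> [r [Hr ->]] [r' [Hr' ->]]; exists (r ++ r'); split.
  by rewrite all_cat Hr Hr'.
by rewrite big_cat.
Qed.

Lemma filtZ n a u : filt iota n u -> filt iota n (a *: u).
Proof.
move=> [r [Hr ->]]; exists [seq (a * p.1, p.2) | p <- r]; split.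
  by rewrite all_map; apply: sub_all Hr => p.
rewrite big_map scaler_sumr; apply: eq_bigr => p _; by rewrite scalerA.
Qed.

Lemma filtN n u : filt iota n u -> filt iota n (- u).
Proof. by move=> H; rewrite -scaleN1r; apply: filtZ. Qed.

Lemma filtB n u v : filt iota n u -> filt iota n v -> filt iota n (u - v).
Proof. by move=> H1 H2; apply: filtD => //; apply: filtN. Qed.

Lemma filt_sum n (I : Type) (r : seq I) (P : pred I) (F : I -> U) :
  (forall i, P i -> filt iota n (F i)) -> filt iota n (\sum_(i <- r | P i) F i).
Proof.
move=> H; apply: (big_ind (filt iota n)) => //; first exact: filt0.
exact: filtD.
Qed.

Lemma filt_mono n m u : (n <= m)%N -> filt iota n u -> filt iota m u.
Proof.
move=> nm [r [Hr ->]]; exists r; split => //.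
by apply: sub_all Hr => p /= /leq_trans; apply.
Qed.

Lemma filt_term n c (s : seq L) : (size s <= n)%N ->
  filt iota n (c *: \prod_(x <- s) iota x).
Proof. by move=> Hs; exists [:: (c, s)]; rewrite /= Hs big_seq1. Qed.

Lemma filt_scal a : filt iota 0 (a%:A).
Proof. by exists [:: (a, [::])]; rewrite /= big_seq1 big_nil. Qed.

Lemma filt1 n : filt iota n 1.
Proof. by apply: (filt_mono (n := 0)) => //; by move: (filt_scal 1); rewrite scale1r. Qed.

Lemma filtM n m u v : filt iota n u -> filt iota m v -> filt iota (n + m) (u * v).
Proof.
move=> [r [Hr ->]] [r' [Hr' ->]]; rewrite big_distrl /= big_seq.
apply: filt_sum => p pr; rewrite big_distrr /= big_seq; apply: filt_sum => q qr.
rewrite -scalerAl -scalerAr scalerA -big_cat /=; apply: filt_term.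
rewrite size_cat leq_add //.
  by move/allP: Hr; apply.
by move/allP: Hr'; apply.
Qed.
End Filt.

Section Tpoly.
Variables (k : fieldType) (L : lmodType k) (U : algType k) (iota : L -> U).
Local Notation inT := (inT iota).

Lemma inT0 : inT 0.
Proof. by move=> i; rewrite coef0; apply: filt0. Qed.
Lemma inTD p q : inT p -> inT q -> inT (p + q).
Proof. by move=> Hp Hq i; rewrite coefD; apply: filtD. Qed.
Lemma inTN p : inT p -> inT (- p).
Proof. by move=> Hp i; rewrite coefN; apply: filtN. Qed.
Lemma inTB p q : inT p -> inT q -> inT (p - q).
Proof. by move=> Hp Hq; apply: inTD => //; apply: inTN. Qed.
Lemma inTM p q : inT p -> inT q -> inT (p * q).
Proof.
move=> Hp Hq i; rewrite coefM; apply: filt_sum => j _.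
have ji : (j <= i)%N by rewrite -ltnS.
have := filtM (Hp j) (Hq (i - j)%N); by rewrite subnKC.
Qed.
Lemma inTXnC n c : filt iota n c -> inT ('X^n * c%:P).
Proof.
move=> Hc i; rewrite coefXnM; case: ltnP => H; first exact: filt0.
rewrite coefC; case: eqP => [E|_]; last exact: filt0.
by apply: filt_mono Hc; rewrite -(subnK H) E.
Qed.
Lemma inTC c : filt iota 0 c -> inT (c%:P).
Proof. by move=> H; have := inTXnC H; rewrite expr0 mul1r. Qed.
Lemma inT1 : inT 1.
Proof. by apply: inTC; apply: filt1. Qed.
Lemma inTXn n : inT 'X^n.
Proof. by have := inTXnC (filt1 iota n); rewrite mulr1. Qed.
Lemma inTX : inT 'X.
Proof. by have := inTXn 1; rewrite expr1. Qed.
Lemma tnT_inT n p : in_tnT iota n p -> inT p.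
Proof. by move=> [q [Hq ->]]; apply: inTM => //; apply: inTXn. Qed.
Lemma tnTB n p q : in_tnT iota n p -> in_tnT iota n q -> in_tnT iota n (p - q).
Proof.
by move=> [p' [Hp ->]] [q' [Hq ->]]; exists (p' - q'); split; [apply: inTB|rewrite mulrBr].
Qed.

Lemma not_tnT1_1 : ~ in_tnT iota 1 1.
Proof.
move=> [q [_ E]]; have := congr1 (fun p : {poly U} => p`_0) E.
by rewrite coef1 expr1 coefXM /= => /eqP; rewrite oner_eq0.
Qed.
Lemma calU1 : in_calU iota 1.
Proof. by split; [apply: inT1 | apply: not_tnT1_1]. Qed.

Variables (star : L -> L) (tau : U -> U).
Hypothesis tauI : alg_involution tau.
Hypothesis tau_iota : forall x, tau (iota x) = iota (star x).

Lemma tau0 : tau 0 = 0.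
Proof.
case: tauI => lin _ _; have := lin 1 0 0; rewrite !scale1r addr0.
by move=> E; apply: (addrI (tau 0)); rewrite addr0 -E.
Qed.
Lemma tauD x y : tau (x + y) = tau x + tau y.
Proof. by case: tauI => lin _ _; have := lin 1 x y; rewrite !scale1r. Qed.
Lemma tauZ a x : tau (a *: x) = a *: tau x.
Proof. by case: tauI => lin _ _; have := lin a x 0; rewrite !addr0 tau0 addr0. Qed.
Lemma tauM x y : tau (x * y) = tau y * tau x.
Proof. by case: tauI. Qed.
Lemma tauK x : tau (tau x) = x.
Proof. by case: tauI. Qed.
Lemma tau1 : tau 1 = 1.
Proof. by have := tauM (tau 1) 1; rewrite mulr1 !tauK mulr1. Qed.
Lemma tauN x : tau (- x) = - tau x.
Proof. by rewrite -scaleN1r tauZ scaleN1r. Qed.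
Lemma tau_alg a : tau (a%:A) = a%:A.
Proof. by rewrite tauZ tau1. Qed.

Lemma tau_sum (I : Type) (r : seq I) (P : pred I) (F : I -> U) :
  tau (\sum_(i <- r | P i) F i) = \sum_(i <- r | P i) tau (F i).
Proof. exact: (big_morph tau tauD tau0). Qed.

Lemma tau_prod (s : seq L) :
  tau (\prod_(x <- s) iota x) = \prod_(x <- rev (map star s)) iota x.
Proof.
elim: s => [|a s IH]; first by rewrite !big_nil tau1.
by rewrite big_cons tauM IH /= rev_cons -cats1 big_cat big_seq1 tau_iota.
Qed.

Lemma tau_filt n u : filt iota n u -> filt iota n (tau u).
Proof.
move=> [r [Hr ->]]; rewrite tau_sum big_seq; apply: filt_sum => p pr.
rewrite tauZ tau_prod; apply: filt_term; rewrite size_rev size_map.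
by move/allP: Hr; apply.
Qed.

Definition tp (p : {poly U}) : {poly U} := map_poly tau p.

Lemma coef_tp p i : (tp p)`_i = tau p`_i.
Proof. by rewrite coef_map_id0 // tau0. Qed.
Lemma tpD p q : tp (p + q) = tp p + tp q.
Proof. by apply/polyP => i; rewrite coefD !coef_tp coefD tauD. Qed.
Lemma tpN p : tp (- p) = - tp p.
Proof. by apply/polyP => i; rewrite coefN !coef_tp coefN tauN. Qed.
Lemma tpB p q : tp (p - q) = tp p - tp q.
Proof. by rewrite tpD tpN. Qed.
Lemma tpM p q : tp (p * q) = tp q * tp p.
Proof.
apply/polyP => i; rewrite coef_tp coefMr coefM tau_sum; apply: eq_bigr => j _.
by rewrite tauM !coef_tp.
Qed.
Lemma tpK p : tp (tp p) = p.
Proof. by apply/polyP => i; rewrite !coef_tp tauK. Qed.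
Lemma tpC c : tp (c%:P) = (tau c)%:P.
Proof. by apply/polyP => i; rewrite coef_tp !coefC; case: eqP => // _; rewrite tau0. Qed.
Lemma tp1 : tp 1 = 1.
Proof. by rewrite tpC tau1. Qed.
Lemma tpX : tp 'X = 'X.
Proof. by apply/polyP => i; rewrite coef_tp !coefX; case: eqP => _; rewrite ?tau1 ?tau0. Qed.
Lemma tpXn n : tp ('X^n) = 'X^n.
Proof. by apply/polyP => i; rewrite coef_tp !coefXn; case: eqP => _; rewrite ?tau1 ?tau0. Qed.
Lemma tpXnC n c : tp ('X^n * c%:P) = 'X^n * (tau c)%:P.
Proof. by rewrite tpM tpC tpXn; exact: commr_polyXn. Qed.

Lemma tp_inT p : inT p -> inT (tp p).
Proof. by move=> Hp i; rewrite coef_tp; apply: tau_filt. Qed.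
Lemma tp_tnT n p : in_tnT iota n p -> in_tnT iota n (tp p).
Proof.
move=> [q [Hq ->]]; exists (tp q); split; first exact: tp_inT.
by rewrite tpM tpXn; exact: commr_polyXn.
Qed.
Lemma tp_calU p : in_calU iota p -> in_calU iota (tp p).
Proof.
move=> [Hp Hn]; split; first exact: tp_inT.
by move=> /tp_tnT; rewrite tpK.
Qed.
End Tpoly.

Section Ginv.
Variable R : pzRingType.
Implicit Types x y c : R.
Definition ginv (x : R) : R :=
  match pselect (is_inv x) with left H => projT1 (cid H) | right _ => 0 end.
Lemma ginvP x : is_inv x -> ginv x * x = 1 /\ x * ginv x = 1.
Proof. by rewrite /ginv; case: pselect => // H _; case: (cid H). Qed.
Lemma ginvl x : is_inv x -> ginv x * x = 1. Proof. by case/ginvP. Qed.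
Lemma ginvr x : is_inv x -> x * ginv x = 1. Proof. by case/ginvP. Qed.
Lemma ginv_uniq x y : y * x = 1 -> x * y = 1 -> ginv x = y.
Proof.
move=> H1 H2; have Hx : is_inv x by exists y.
by rewrite -[ginv x]mulr1 -H2 mulrA ginvl // mul1r.
Qed.
Lemma is_invM x y : is_inv x -> is_inv y -> is_inv (x * y).
Proof.
move=> Hx Hy; exists (ginv y * ginv x); split.
  by rewrite mulrA -(mulrA _ _ x) ginvl // mulr1 ginvl.
by rewrite mulrA -(mulrA x) ginvr // mulr1 ginvr.
Qed.
Lemma ginvM x y : is_inv x -> is_inv y -> ginv (x * y) = ginv y * ginv x.
Proof.
move=> Hx Hy; apply: ginv_uniq.
  by rewrite mulrA -(mulrA _ _ x) ginvl // mulr1 ginvl.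
by rewrite mulrA -(mulrA x) ginvr // mulr1 ginvr.
Qed.
Lemma is_inv1 : is_inv (1 : R). Proof. by exists 1; rewrite mulr1. Qed.
Lemma ginv1 : ginv (1 : R) = 1. Proof. by apply: ginv_uniq; rewrite mulr1. Qed.
Lemma is_inv_ginv x : is_inv x -> is_inv (ginv x).
Proof. by move=> H; exists x; rewrite ginvl // ginvr. Qed.
Lemma ginvK x : is_inv x -> ginv (ginv x) = x.
Proof. by move=> H; apply: ginv_uniq; rewrite ?ginvl ?ginvr. Qed.
Lemma comm_ginv c x : is_inv x -> c * x = x * c -> c * ginv x = ginv x * c.
Proof.
move=> Hx E; rewrite -[c * _]mul1r -(ginvl Hx) -mulrA (mulrA x) -E.
by rewrite -!mulrA ginvr // mulr1.
Qed.
End Ginv.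

Lemma ring_hom_ginv (R S : pzRingType) (f : R -> S) x :
  ring_hom f -> is_inv x -> is_inv (f x) /\ f (ginv x) = ginv (f x).
Proof.
move=> [fD fM f1] Hx; have H1 : f (ginv x) * f x = 1 by rewrite -fM ginvl.
have H2 : f x * f (ginv x) = 1 by rewrite -fM ginvr.
split; first by exists (f (ginv x)).
by apply/esym/ginv_uniq.
Qed.

Section Ore.
Variables (k : fieldType) (L : lmodType k) (U : algType k) (iota : L -> U).
Variables (n : nat) (Sn : pzRingType) (phi : {poly U} -> Sn).
Hypothesis Hloc : is_Ore_loc_Tn iota n phi.
Local Notation inT := (inT iota).

Lemma phiD p q : inT p -> inT q -> phi (p + q) = phi p + phi q.
Proof. by case: Hloc => H _; apply: H. Qed.
Lemma phiM p q : inT p -> inT q -> phi (p * q) = phi p * phi q.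
Proof. by case: Hloc => _ [H _]; apply: H. Qed.
Lemma phi1 : phi 1 = 1.
Proof. by case: Hloc => _ [] _ [H _]; apply: H. Qed.
Lemma phi_ker p : inT p -> (phi p = 0 <-> in_tnT iota n p).
Proof. by case: Hloc => _ [] _ [] _ [H _]; apply: H. Qed.
Lemma phi_inv u : in_calU iota u -> is_inv (phi u).
Proof. by case: Hloc => _ [] _ [] _ [] _ [H _]; apply: H. Qed.
Lemma phi_frac x : exists u r, [/\ in_calU iota u, inT r & phi u * x = phi r].
Proof. by case: Hloc => _ [] _ [] _ [] _ [] _ H; apply: H. Qed.

Lemma phi0 : phi 0 = 0.
Proof.
have := phiD (inT0 iota) (inT0 iota); rewrite addr0 => E.
by apply: (addrI (phi 0)); rewrite addr0 -E.
Qed.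
Lemma phiN p : inT p -> phi (- p) = - phi p.
Proof.
move=> Hp; apply: (addrI (phi p)); rewrite -phiD ?subrr ?phi0 //.
exact: inTN.
Qed.
Lemma phiB p q : inT p -> inT q -> phi (p - q) = phi p - phi q.
Proof. by move=> Hp Hq; rewrite phiD ?phiN //; apply: inTN. Qed.

Lemma phi_central c : inT c -> (forall p, c * p = p * c) ->
  forall x, phi c * x = x * phi c.
Proof.
move=> Hc Hcomm x; have [u [r [Hu Hr E]]] := phi_frac x.
have Hi := phi_inv Hu.
have -> : x = ginv (phi u) * phi r by rewrite -E mulrA ginvl // mul1r.
have Cu : phi c * phi u = phi u * phi c by rewrite -!phiM ?Hcomm //; case: Hu.
have Cr : phi c * phi r = phi r * phi c by rewrite -!phiM ?Hcomm.
by rewrite mulrA comm_ginv // -!mulrA Cr.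
Qed.

Variables (star : L -> L) (tau : U -> U).
Hypothesis tauI : alg_involution tau.
Hypothesis tau_iota : forall x, tau (iota x) = iota (star x).
Local Notation tp := (tp tau).

Lemma phi_eq_tp p q : inT p -> inT q -> phi p = phi q -> phi (tp p) = phi (tp q).
Proof.
move=> Hp Hq E.
have : in_tnT iota n (p - q) by apply/phi_ker; [apply: inTB | rewrite phiB // E subrr].
move/(tp_tnT tauI tau_iota); rewrite tpB //= => H.
have Hp' := tp_inT tauI tau_iota Hp; have Hq' := tp_inT tauI tau_iota Hq.
by apply/eqP; rewrite -subr_eq0 -phiB //; apply/eqP/phi_ker => //; apply: inTB.
Qed.

Lemma phi_tpM p q : inT p -> inT q -> phi (tp (p * q)) = phi (tp q) * phi (tp p).
Proof. by move=> Hp Hq; rewrite tpM // phiM //; apply: tp_inT. Qed.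

Definition good m := [/\ inT m, is_inv (phi m) & is_inv (phi (tp m))].
Lemma calU_good u : in_calU iota u -> good u.
Proof.
move=> Hu; split; [by case: Hu | exact: phi_inv |].
by apply: phi_inv; apply: tp_calU.
Qed.

Lemma frac2 x : exists ur : {poly U} * {poly U},
  [/\ in_calU iota ur.1, inT ur.2 & phi ur.1 * x = phi ur.2].
Proof. by have [u [r H]] := phi_frac x; exists (u, r). Qed.

Definition sig (x : Sn) : Sn :=
  let ur := projT1 (cid (frac2 x)) in phi (tp ur.2) * ginv (phi (tp ur.1)).

Lemma sig_spec x m s : good m -> inT s -> phi m * x = phi s ->
  sig x = phi (tp s) * ginv (phi (tp m)).
Proof.
move=> [Hm Im Itm] Hs Ex; rewrite /sig; case: (cid (frac2 x)) => [[u r] /= [Hu Hr Er]] /=.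
have [a [b [Ha Hb Eab]]] := phi_frac (phi u * ginv (phi m)).
have Hu' := Hu; case: Hu' => HuT _; have Ha' := Ha; case: Ha' => HaT _.
have E1 : phi (a * u) = phi (b * m).
  by rewrite !phiM // -Eab -!mulrA ginvl // mulr1.
have E2 : phi (a * r) = phi (b * s).
  by rewrite !phiM // -Eab -Er -Ex !mulrA -(mulrA _ (ginv _) (phi m)) ginvl // mulr1.
have {E1} E1 := phi_eq_tp (inTM HaT HuT) (inTM Hb Hm) E1.
have {E2} E2 := phi_eq_tp (inTM HaT Hr) (inTM Hb Hs) E2.
rewrite !phi_tpM // in E1 E2.
have IA := phi_inv (tp_calU tauI tau_iota Ha).
have IU := phi_inv (tp_calU tauI tau_iota Hu).
move: E1 E2 IA IU.
set A := phi (tp a); set B := phi (tp b); set Uu := phi (tp u).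
set M := phi (tp m); set Rr := phi (tp r); set S := phi (tp s).
move=> E1 E2 IA IU.
transitivity (S * B * ginv A * ginv Uu).
  by rewrite -{1}(mulr1 Rr) -(ginvr IA) mulrA E2.
have HB : B = ginv M * (Uu * A) by rewrite E1 mulrA ginvl // mul1r.
rewrite HB !mulrA -(mulrA _ A (ginv A)) ginvr // mulr1.
by rewrite -(mulrA _ Uu) ginvr // mulr1.
Qed.

Lemma sig_phi p : inT p -> sig (phi p) = phi (tp p).
Proof.
move=> Hp; rewrite (@sig_spec _ 1 p) ?phi1 ?mul1r //; last exact: calU_good (calU1 iota).
by rewrite tp1 // phi1 ginv1 mulr1.
Qed.

Lemma sig_ginv u : in_calU iota u -> sig (ginv (phi u)) = ginv (phi (tp u)).
Proof.
move=> Hu; rewrite (@sig_spec _ u 1).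
- by rewrite tp1 // phi1 mul1r.
- exact: calU_good.
- exact: inT1.
- by rewrite ginvr ?phi1 //; apply: phi_inv.
Qed.

Lemma sig1 : sig 1 = 1.
Proof. by rewrite -phi1 sig_phi ?tp1 ?phi1 //; apply: inT1. Qed.

Lemma sigD x y : sig (x + y) = sig x + sig y.
Proof.
have [u [r [Hu Hr Ex]]] := phi_frac x.
have [u' [r' [Hu' Hr' Ey]]] := phi_frac y.
have [a [b [Ha Hb Eab]]] := phi_frac (phi u * ginv (phi u')).
have HuT : inT u by case: Hu.
have Hu'T : inT u' by case: Hu'.
have HaT : inT a by case: Ha.
have E1 : phi a * phi u = phi b * phi u'.
  by rewrite -Eab -!mulrA ginvl ?mulr1 //; apply: phi_inv.
have Gm : good (a * u).
  split; first exact: inTM.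
    by rewrite phiM //; apply: is_invM; apply: phi_inv.
  by rewrite phi_tpM //; apply: is_invM; apply/phi_inv/tp_calU.
have Ex' : phi (a * u) * x = phi (a * r) by rewrite !phiM // -mulrA Ex.
have Ey' : phi (a * u) * y = phi (b * r') by rewrite !phiM // E1 -mulrA Ey.
have Exy : phi (a * u) * (x + y) = phi (a * r + b * r').
  by rewrite mulrDr Ex' Ey' phiD //; apply: inTM.
rewrite (sig_spec Gm _ Ex') ?(sig_spec Gm _ Ey') ?(sig_spec Gm _ Exy);
  try by repeat apply: inTD; apply: inTM.
rewrite tpD // phiD -?mulrDl //; by apply: tp_inT => //; apply: inTM.
Qed.

Lemma sigM x y : sig (x * y) = sig y * sig x.
Proof.
have [u [r [Hu Hr Ex]]] := phi_frac x.
have [v [s [Hv Hs Ey]]] := phi_frac y.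
have [c [d [Hc Hd Ecd]]] := phi_frac (phi r * ginv (phi v)).
have HuT : inT u by case: Hu.
have HvT : inT v by case: Hv.
have HcT : inT c by case: Hc.
have Iv := phi_inv Hv.
have Gm : good (c * u).
  split; first exact: inTM.
    by rewrite phiM //; apply: is_invM; apply: phi_inv.
  by rewrite phi_tpM //; apply: is_invM; apply/phi_inv/tp_calU.
have Eyv : y = ginv (phi v) * phi s by rewrite -Ey mulrA ginvl // mul1r.
have Exy : phi (c * u) * (x * y) = phi (d * s).
  by rewrite !phiM // -!mulrA (mulrA (phi u)) Ex Eyv (mulrA (phi r)) mulrA Ecd.
have E1 : phi (c * r) = phi (d * v).
  by rewrite !phiM // -Ecd -!mulrA ginvl // mulr1.
have E1' := phi_eq_tp (inTM HcT Hr) (inTM Hd HvT) E1; rewrite !phi_tpM // in E1'.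
rewrite (sig_spec Gm (inTM Hd Hs) Exy) (sig_spec (calU_good Hu) Hr Ex).
rewrite (sig_spec (calU_good Hv) Hs Ey).
have IC := phi_inv (tp_calU tauI tau_iota Hc).
have IV := phi_inv (tp_calU tauI tau_iota Hv).
have IU := phi_inv (tp_calU tauI tau_iota Hu).
rewrite !phi_tpM // ginvM //.
move: E1' IC IV IU.
set C := phi (tp c); set D := phi (tp d); set Uu := phi (tp u).
set V := phi (tp v); set Rr := phi (tp r); set S := phi (tp s).
move=> E1' IC IV IU.
have K : ginv V * Rr = D * ginv C.
  by rewrite -[ginv V * Rr]mulr1 -(ginvr IC) mulrA -(mulrA _ Rr) E1' mulrA ginvl // mul1r.
by rewrite !mulrA -(mulrA S (ginv V)) K !mulrA.
Qed.

Lemma sigK x : sig (sig x) = x.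
Proof.
have [u [r [Hu Hr Ex]]] := phi_frac x.
rewrite (sig_spec (calU_good Hu) Hr Ex) sigM sig_ginv; last exact: tp_calU.
rewrite sig_phi; last exact: tp_inT.
rewrite !tpK // -Ex mulrA ginvl ?mul1r //; exact: phi_inv.
Qed.

End Ore.

Section Lim.
Local Unset Implicit Arguments.
Variables (k : fieldType) (L : lmodType k) (U : algType k) (iota : L -> U).
Variables (Sn : nat -> pzRingType) (phi : forall n, {poly U} -> Sn n)
    (rho : forall n, Sn n.+1 -> Sn n) (S : pzRingType) (pi : forall n, S -> Sn n)
    (theta : {poly U} -> S) (D : unitRingType) (j : S -> D) (eps : U -> D).
Hypothesis Hld : lichtman_data iota phi rho pi theta j eps.
Local Notation inT := (inT iota).

Lemma Hloc n : is_Ore_loc_Tn iota n (phi n).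
Proof. by case: Hld => H _; apply: H. Qed.
Lemma rhoR n : ring_hom (rho n).
Proof. by case: Hld => _ [H _]; case: (H n). Qed.
Lemma rho_phi n p : inT p -> rho n (phi n.+1 p) = phi n p.
Proof. by case: Hld => _ [H _]; case: (H n) => _; apply. Qed.
Lemma piR n : ring_hom (pi n).
Proof. by case: Hld => _ [_ [H _]]; case: (H n). Qed.
Lemma pi_rho n s : rho n (pi n.+1 s) = pi n s.
Proof. by case: Hld => _ [_ [H _]]; case: (H n) => _; apply. Qed.
Lemma Hlim (x : forall n, Sn n) : (forall n, rho n (x n.+1) = x n) ->
  exists s, forall n, pi n s = x n.
Proof. by case: Hld => _ [_ [_ [H _]]] /H [s [Hs _]]; exists s. Qed.
Lemma S_ext s s' : (forall n, pi n s = pi n s') -> s = s'.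
Proof.
case: Hld => _ [_ [_ [H _]]] E.
have [|s0 [_ Hs0]] := H (fun n => pi n s'); first by move=> n; apply: pi_rho.
by rewrite (Hs0 s E) (Hs0 s').
Qed.
Lemma pi_theta n p : inT p -> pi n (theta p) = phi n p.
Proof. by case: Hld => _ [_ [_ [_ [H _]]]]; apply: H. Qed.
Lemma jR : ring_hom j.
Proof. by case: Hld => _ [_ [_ [_ [_ [[H _] _]]]]]. Qed.
Lemma j_inj : injective j.
Proof. by case: Hld => _ [_ [_ [_ [_ [[_ [H _]] _]]]]]. Qed.
Local Notation t := (j (theta 'X)).
Lemma t_unit : t \is a GRing.unit.
Proof. by case: Hld => _ [_ [_ [_ [_ [[_ [_ [H _]]] _]]]]]. Qed.
Lemma D_frac d : exists m s, t ^+ m * d = j s.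
Proof. by case: Hld => _ [_ [_ [_ [_ [[_ [_ [_ H]]] _]]]]]. Qed.
Lemma Heps u n : filt iota n u -> eps u * t ^+ n = j (theta ('X ^+ n * u%:P)).
Proof. by case: Hld => _ [_ [_ [_ [_ [_ H]]]]]; apply: H. Qed.

Lemma piD n x y : pi n (x + y) = pi n x + pi n y. Proof. by case: (piR n). Qed.
Lemma piM n x y : pi n (x * y) = pi n x * pi n y. Proof. by case: (piR n). Qed.
Lemma pi1 n : pi n 1 = 1. Proof. by case: (piR n). Qed.
Lemma jD x y : j (x + y) = j x + j y. Proof. by case: jR. Qed.
Lemma jM x y : j (x * y) = j x * j y. Proof. by case: jR. Qed.
Lemma j1 : j 1 = 1. Proof. by case: jR. Qed.
Lemma jX x m : j (x ^+ m) = j x ^+ m.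
Proof. by elim: m => [|m IH]; rewrite ?expr0 ?j1 // !exprS jM IH. Qed.

Lemma thetaD p q : inT p -> inT q -> theta (p + q) = theta p + theta q.
Proof.
move=> Hp Hq; apply: S_ext => n; rewrite piD (pi_theta _ _ (inTD Hp Hq)).
by rewrite !pi_theta // (phiD (Hloc n)).
Qed.
Lemma thetaM p q : inT p -> inT q -> theta (p * q) = theta p * theta q.
Proof.
move=> Hp Hq; apply: S_ext => n; rewrite piM (pi_theta _ _ (inTM Hp Hq)).
by rewrite !pi_theta // (phiM (Hloc n)).
Qed.
Lemma theta1 : theta 1 = 1.
Proof. by apply: S_ext => n; rewrite pi1 (pi_theta _ _ (inT1 iota)) (phi1 (Hloc n)). Qed.
Lemma thetaXn m : theta ('X ^+ m) = theta 'X ^+ m.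
Proof.
elim: m => [|m IH]; first by rewrite !expr0 theta1.
by rewrite !exprS (thetaM _ _ (inTX iota) (inTXn iota m)) IH.
Qed.

Lemma S_central c : (forall n x, pi n c * x = x * pi n c) -> forall s, c * s = s * c.
Proof. by move=> H s; apply: S_ext => n; rewrite !piM H. Qed.
Lemma theta_central c : inT c -> (forall p, c * p = p * c) ->
  forall s, theta c * s = s * theta c.
Proof.
move=> Hc H; apply: S_central => n x; rewrite pi_theta //.
exact: (phi_central (Hloc n)).
Qed.
Lemma thetaX_central s : theta 'X * s = s * theta 'X.
Proof. by apply: theta_central; [exact: inTX | move=> p; apply/esym/commr_polyX]. Qed.

Lemma j_central c : (forall s, c * s = s * c) -> forall d, j c * d = d * j c.
Proof.
move=> Hc d; have [m [s E]] := D_frac d.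
have Ct : GRing.comm (j c) (t ^+ m).
  by apply: commrX; rewrite /GRing.comm -!jM Hc.
apply: (mulrI (unitrX m t_unit)).
by rewrite mulrA -Ct -mulrA E -jM Hc jM -E mulrA.
Qed.
Lemma t_central d : t * d = d * t.
Proof. exact: (j_central _ thetaX_central). Qed.
Lemma tX_central m d : t ^+ m * d = d * t ^+ m.
Proof. exact: esym (commrX m (esym (t_central d))). Qed.

Variables (star : L -> L) (tau : U -> U).
Hypothesis tauI : alg_involution tau.
Hypothesis tau_iota : forall x, tau (iota x) = iota (star x).
Local Notation tp := (tp tau).

Definition sn n : Sn n -> Sn n := sig (Hloc n) tau.

Lemma rho_sn n x : rho n (sn n.+1 x) = sn n (rho n x).
Proof.
have [u [r [Hu Hr E]]] := phi_frac (Hloc n.+1) x.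
have HuT : inT u by case: Hu.
rewrite /sn (sig_spec _ tauI tau_iota (calU_good (Hloc n.+1) tauI tau_iota Hu) Hr E).
have Hu' := tp_calU tauI tau_iota Hu.
have [_ G] := ring_hom_ginv (rhoR n) (phi_inv (Hloc n.+1) Hu').
have Hr' := tp_inT tauI tau_iota Hr; have HuT' : inT (tp u) by case: Hu'.
case: (rhoR n) => _ RM _; rewrite RM G (rho_phi _ _ Hr') (rho_phi _ _ HuT').
symmetry; apply: (sig_spec _ tauI tau_iota (calU_good (Hloc n) tauI tau_iota Hu) Hr).
by rewrite -(rho_phi _ _ HuT) -RM E rho_phi.
Qed.

Lemma sS_ex s : exists s', forall n, pi n s' = sn n (pi n s).
Proof. by apply: Hlim => n; rewrite rho_sn pi_rho. Qed.
Definition sS s : S := projT1 (cid (sS_ex s)).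
Lemma pi_sS n s : pi n (sS s) = sn n (pi n s).
Proof. by rewrite /sS; case: (cid (sS_ex s)) => s' /= H; apply: H. Qed.

Lemma sSD x y : sS (x + y) = sS x + sS y.
Proof. by apply: S_ext => n; rewrite piD !pi_sS piD /sn (sigD _ tauI tau_iota). Qed.
Lemma sSM x y : sS (x * y) = sS y * sS x.
Proof. by apply: S_ext => n; rewrite piM !pi_sS piM /sn (sigM _ tauI tau_iota). Qed.
Lemma sSK x : sS (sS x) = x.
Proof. by apply: S_ext => n; rewrite !pi_sS /sn (sigK _ tauI tau_iota). Qed.
Lemma sS_theta p : inT p -> sS (theta p) = theta (tp p).
Proof.
move=> Hp; apply: S_ext => n; rewrite pi_sS (pi_theta _ _ Hp).
rewrite (pi_theta _ _ (tp_inT tauI tau_iota Hp)).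
by rewrite /sn (sig_phi _ tauI tau_iota).
Qed.
Lemma sSX : sS (theta 'X) = theta 'X.
Proof. by rewrite (sS_theta _ (inTX iota)) tpX. Qed.
Lemma sSXn m : sS (theta 'X ^+ m) = theta 'X ^+ m.
Proof. by rewrite -thetaXn (sS_theta _ (inTXn iota m)) tpXn. Qed.

Lemma D_frac2 d : exists ms : nat * S, t ^+ ms.1 * d = j ms.2.
Proof. by have [m [s E]] := D_frac d; exists (m, s). Qed.
Definition sD : D -> D := locked (fun d : D =>
  let ms := projT1 (cid (D_frac2 d)) in (t ^+ ms.1)^-1 * j (sS ms.2)).

Lemma sD_spec d m s : t ^+ m * d = j s -> t ^+ m * sD d = j (sS s).
Proof.
move=> E; rewrite /sD -lock; case: (cid (D_frac2 d)) => [[m0 s0]] /= E0.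
have U0 := unitrX m0 t_unit.
have E1 : theta 'X ^+ m * s0 = theta 'X ^+ m0 * s.
  apply: j_inj; rewrite !jM !jX -E -E0 !mulrA -!exprD.
  by rewrite addnC.
have E2 : j (sS s0) * t ^+ m = j (sS s) * t ^+ m0.
  by rewrite -!jX -!jM -(sSXn m) -(sSXn m0) -!sSM E1.
apply: (mulrI U0); rewrite mulrA (tX_central m0 (t ^+ m)) -mulrA (mulVKr U0).
by rewrite (tX_central m) E2 -(tX_central m0).
Qed.

Lemma sD_j s : sD (j s) = j (sS s).
Proof. by have := @sD_spec (j s) 0 s; rewrite expr0 !mul1r; apply. Qed.
Lemma sD1 : sD 1 = 1.
Proof.
rewrite -j1 sD_j; congr j; apply: S_ext => n; rewrite pi_sS pi1 /sn -(phi1 (Hloc n)).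
by rewrite (sig_phi _ tauI tau_iota (inT1 iota)) tp1 // (phi1 (Hloc n)).
Qed.
Lemma sDt : sD t = t.
Proof. by rewrite sD_j sSX. Qed.

Lemma sDD d e : sD (d + e) = sD d + sD e.
Proof.
have [m [s E]] := D_frac d; have [m' [s' E']] := D_frac e.
have E2 : t ^+ (m + m') * (d + e) = j (theta 'X ^+ m' * s + theta 'X ^+ m * s').
  rewrite jD !jM !jX -E -E' !mulrA exprD mulrDr ?mulrA.
  by rewrite (tX_central m (t ^+ m')).
apply: (mulrI (unitrX (m + m') t_unit)); rewrite (sD_spec _ _ _ E2).
rewrite sSD !sSM !sSXn jD !jM !jX mulrDr exprD (tX_central m (t ^+ m')) -!mulrA.
rewrite (sD_spec _ _ _ E); congr (_ + _); first by rewrite (tX_central m').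
by rewrite mulrA (tX_central m' (t ^+ m)) -mulrA (sD_spec _ _ _ E') (tX_central m).
Qed.

Lemma sDM d e : sD (d * e) = sD e * sD d.
Proof.
have [m [s E]] := D_frac d; have [m' [s' E']] := D_frac e.
have E2 : t ^+ (m + m') * (d * e) = j (s * s').
  rewrite jM -E -E' exprD -!mulrA; congr (t ^+ m * _).
  by rewrite !mulrA (tX_central m' d).
apply: (mulrI (unitrX (m + m') t_unit)); rewrite (sD_spec _ _ _ E2) sSM jM exprD.
rewrite -(sD_spec _ _ _ E) -(sD_spec _ _ _ E') !mulrA; congr (_ * _).
by rewrite -(tX_central m (t ^+ m' * sD e)) mulrA.
Qed.

Lemma sDK d : sD (sD d) = d.
Proof.
have [m [s E]] := D_frac d.
have E1 := sD_spec _ _ _ E; have E2 := sD_spec _ _ _ E1.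
by apply: (mulrI (unitrX m t_unit)); rewrite E2 sSK E.
Qed.

Lemma sD0 : sD 0 = 0.
Proof. by apply: (addrI (sD 0)); rewrite -sDD !addr0. Qed.
Lemma sDN d : sD (- d) = - sD d.
Proof. by apply: (addrI (sD d)); rewrite -sDD !subrr sD0. Qed.
Lemma sDB d e : sD (d - e) = sD d - sD e.
Proof. by rewrite sDD sDN. Qed.
Lemma sDtX n : sD (t ^+ n) = t ^+ n.
Proof.
elim: n => [|n IH]; first by rewrite !expr0 sD1.
by rewrite exprS sDM IH sDt -exprSr exprS.
Qed.

Lemma sD_unit d : d \is a GRing.unit -> sD d \is a GRing.unit /\ sD (d^-1) = (sD d)^-1.
Proof.
move=> Ud.
have H1 : sD (d^-1) * sD d = 1 by rewrite -sDM mulrV // sD1.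
have H2 : sD d * sD (d^-1) = 1 by rewrite -sDM mulVr // sD1.
have Us : sD d \is a GRing.unit by apply/unitrP; exists (sD d^-1).
split => //; apply: (mulrI Us); by rewrite H2 mulrV.
Qed.
Lemma sDV d : sD (d^-1) = (sD d)^-1.
Proof.
have [Ud|nUd] := boolP (d \is a GRing.unit); first by case: (sD_unit _ Ud).
rewrite (invr_out nUd) invr_out //; apply/negP => Us.
by have [] := sD_unit _ Us; rewrite sDK => H _; rewrite H in nUd.
Qed.

Lemma sD_eps u n : filt iota n u -> sD (eps u) = eps (tau u).
Proof.
move=> Hu; have Hu' := tau_filt tauI tau_iota Hu.
have E := Heps u n Hu; have E' := Heps (tau u) n Hu'.
apply: (mulrI (unitrX n t_unit)).
rewrite -{1}(sDtX n) -sDM E sD_j (sS_theta _ (inTXnC Hu)).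
by rewrite (tpXnC tauI) -E' (tX_central n).
Qed.

Lemma eps_alg_central a d : eps (a%:A) * d = d * eps (a%:A).
Proof.
have E := Heps (a%:A) 0 (filt_scal iota a); rewrite expr0 mulr1 in E.
rewrite E; apply: j_central; apply: theta_central; first exact: inTXnC (filt_scal iota a).
move=> p; rewrite expr0 mul1r; apply/polyP => i.
by rewrite coefCM coefMC mulr_algl mulr_algr.
Qed.

Lemma sD_epsZ a x : sD (eps (a%:A) * x) = eps (a%:A) * sD x.
Proof.
by rewrite sDM (sD_eps _ 0 (filt_scal iota a)) (tau_alg tauI) eps_alg_central.
Qed.
End Lim.

Section Span.
Variables (k : fieldType) (L : lmodType k) (U : algType k) (iota : L -> U).

Definition Vp : pred U := fun u => `[< exists n, filt iota n u >].

Lemma Vp_closed : GRing.subsemialg_closed Vp.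
Proof.
split.
- by apply/asboolP; exists 0%N; apply: filt1.
- split; first by apply/asboolP; exists 0%N; apply: filt0.
  move=> u v /asboolP [n Hu] /asboolP [m Hv]; apply/asboolP; exists (maxn n m).
  by apply: filtD; [apply: filt_mono Hu; apply: leq_maxl | apply: filt_mono Hv; apply: leq_maxr].
- by move=> a u /asboolP [n Hu]; apply/asboolP; exists n; apply: filtZ.
- move=> u v /asboolP [n Hu] /asboolP [m Hv]; apply/asboolP; exists (n + m)%N.
  exact: filtM.
Qed.

Record Vt := VT { vval : U; vP : Vp vval }.
HB.instance Definition _ := [isSub for vval].
HB.instance Definition _ := [Choice of Vt by <:].
HB.instance Definition _ := GRing.SubChoice_isSubAlgebra.Build k U Vp Vt Vp_closed.

Check (Vt : algType k).
End Span.
Section T.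
Variables (k : fieldType) (L : lmodType k) (U : algType k) (iota : L -> U).
Check (Vt iota : algType k).
Lemma vM (x y : Vt iota) : vval (x * y) = vval x * vval y. Proof. by []. Qed.
Lemma vD (x y : Vt iota) : vval (x + y) = vval x + vval y. Proof. by []. Qed.
Lemma vZ a (x : Vt iota) : vval (a *: x) = a *: vval x. Proof. by []. Qed.
Lemma v1 : vval (1 : Vt iota) = 1. Proof. by []. Qed.
Lemma vB (x y : Vt iota) : vval (x - y) = vval x - vval y. Proof. by []. Qed.
End T.

Section Op. Variables (k : fieldType) (U : algType k).
Definition Uop : Type := U^c.
HB.instance Definition _ := GRing.NzRing.on Uop.
HB.instance Definition _ := GRing.Lmodule.copy Uop U.
HB.instance Definition _ := GRing.Lmodule_isLalgebra.Build k Uop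
  (fun a (u v : U) => @scalerAr k U a v u).
HB.instance Definition _ := GRing.Lalgebra_isAlgebra.Build k Uop
  (fun a (x y : U) => @scalerAl k U a y x).
Lemma Uop_mul (a b : Uop) : a * b = (b : U) * a. Proof. by []. Qed.
Lemma Uop_sub (a b : Uop) : a - b = (a : U) - b. Proof. by []. Qed.
Lemma Uop_scale c (a : Uop) : c *: a = c *: (a : U). Proof. by []. Qed.
Lemma Uop_1 : (1 : Uop) = (1 : U). Proof. by []. Qed.
End Op.

Section Span2.
Variables (k : fieldType) (L : lmodType k) (U : algType k) (iota : L -> U).
Variable br : L -> L -> L.

Lemma all_filt (HU : is_UEA br iota) u : exists n, filt iota n u.
Proof.
case: HU => [[ilin ibr] Huniv].
have Hx x : Vp iota (iota x).
  apply/asboolP; exists 1%N; have := @filt_term _ _ _ iota 1 1 [:: x].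
  by rewrite big_seq1 scale1r; apply.
pose f := fun x => VT (Hx x).
have Hf : lie_map br f.
  split; first by move=> a x y; apply: val_inj => /=; apply: ilin.
  by move=> x y; apply: val_inj => /=; apply: ibr.
have [[g [Hg Hgi]] _] := Huniv _ f Hf.
have [_ Hun] := Huniv _ iota (conj ilin ibr).
have E : vval (g u) = u.
  apply: (Hun (fun u => vval (g u)) id) => //.
  - case: Hg => gl gm g1; split => [a x y|x y|] /=; by rewrite ?gl ?gm ?g1.
  - by move=> x /=; rewrite Hgi.
by have := vP (g u); rewrite E => /asboolP.
Qed.

Variable star : L -> L.
Hypothesis Hbr : is_lie_bracket br.
Hypothesis Hstar : lie_involution br star.
Hypothesis HU : is_UEA br iota.

Lemma alg_hom_id : alg_hom (@id U).
Proof. by split. Qed.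

Lemma tau_exists : exists tau : U -> U,
  [/\ alg_involution tau, (forall x, tau (iota x) = iota (star x)) &
      (forall tau' : U -> U, alg_involution tau' ->
         (forall x, tau' (iota x) = iota (star x)) -> forall u, tau' u = tau u)].
Proof.
case: HU => [[ilin ibr] Huniv]; case: Hstar => slin sbr sK.
pose f := fun x => (iota (star x) : Uop U).
have Hf : lie_map (A := Uop U) br f.
  rewrite /lie_map; split; first by move=> a x y; rewrite /f slin ilin.
  by move=> x y; rewrite /f sbr ibr.
have [[g [Hg Hgi]] Hguniq] := Huniv _ f Hf.
have [_ Hun] := Huniv _ iota (conj ilin ibr).
case: Hg => gl gm g1.
have gg : forall u, g (g u) = u.
  apply: (Hun (fun u => g (g u)) id) => //.
  - split => [a x y|x y|]; by rewrite ?gl ?gm ?g1.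
  - by move=> x; rewrite Hgi /f Hgi /f sK.
have Hinv : alg_involution (g : U -> U).
  by split; [exact: gl | exact: gm | exact: gg].
exists g; split => // tau' [tl tm tK] Ht u.
have t1 : tau' 1 = 1.
  by have := tm (tau' 1) 1; rewrite mulr1 !tK mulr1.
apply: (Hguniq (tau' : U -> Uop U) g) => //.
Qed.
End Span2.

Unset Implicit Arguments.

Section Brk.
Variables (k : fieldType) (L : lmodType k) (br : L -> L -> L).
Hypothesis Hbr : is_lie_bracket br.
Lemma brD1 x y z : br (x + y) z = br x z + br y z.
Proof. by case: Hbr => H _ _ _; have := H 1 x y z; rewrite !scale1r. Qed.
Lemma brD2 x y z : br z (x + y) = br z x + br z y.
Proof. by case: Hbr => _ H _ _; have := H 1 x y z; rewrite !scale1r. Qed.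
Lemma br01 z : br 0 z = 0.
Proof. by apply: (addrI (br 0 z)); rewrite -brD1 !addr0. Qed.
Lemma br02 z : br z 0 = 0.
Proof. by apply: (addrI (br z 0)); rewrite -brD2 !addr0. Qed.
Lemma brN1 y z : br (- y) z = - br y z.
Proof. by apply: (addrI (br y z)); rewrite -brD1 !subrr br01. Qed.
Lemma brN2 y z : br z (- y) = - br z y.
Proof. by apply: (addrI (br z y)); rewrite -brD2 !subrr br02. Qed.
Lemma br_anti x y : br y x = - br x y.
Proof.
case: Hbr => _ _ H0 _.
have := H0 (x + y); rewrite brD1 !brD2 !H0 add0r addr0 addrC => /eqP.
by rewrite addr_eq0 => /eqP.
Qed.
Lemma opp_inv : lie_involution br (fun x => - x).
Proof.
split.
- by move=> a x y; rewrite opprD scalerN.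
- by move=> x y; rewrite brN1 brN2 opprK (br_anti x y).
- by move=> x; rewrite opprK.
Qed.
End Brk.

Lemma main_gen (k : fieldType) (L : lmodType k) (br : L -> L -> L)
    (star : L -> L) (U : algType k) (iota : L -> U)
    (Sn : nat -> pzRingType) (phi : forall n, {poly U} -> Sn n)
    (rho : forall n, Sn n.+1 -> Sn n) (S : pzRingType) (pi : forall n, S -> Sn n)
    (theta : {poly U} -> S) (D : unitRingType) (j : S -> D) (eps : U -> D) :
  is_lie_bracket br -> lie_involution br star ->
  is_UEA br iota ->
  lichtman_data iota phi rho pi theta j eps ->
  (exists tau : U -> U,
     [/\ alg_involution tau, (forall x, tau (iota x) = iota (star x)),
         (forall tau' : U -> U, alg_involution tau' ->
            (forall x, tau' (iota x) = iota (star x)) -> forall u, tau' u = tau u) &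
         exists sigma : D -> D,
           divring_involution eps (gen_divring (fun d => exists u, d = eps u)) sigma /\
           forall u, sigma (eps u) = eps (tau u)]).
Proof.
move=> Hbr Hstar HU Hld.
have [tau [tauI tau_iota tau_uniq]] := tau_exists Hstar HU.
exists tau; split => //.
pose sg := sD _ _ _ _ _ _ _ _ _ _ _ _ _ Hld _ _ tauI tau_iota.
have sg_eps : forall u, sg (eps u) = eps (tau u).
  by move=> u; have [n Hn] := all_filt HU u; exact: (sD_eps _ _ _ _ _ _ _ _ _ _ _ _ _ Hld _ _ tauI tau_iota _ _ Hn).
exists sg; split => //; split.
- move=> x Hx P h1 h2 h3 h4 h5.
  apply: (Hx (fun d => P (sg d))).
  + by move=> _ [u ->]; rewrite sg_eps; apply: h1; exists (tau u).
  + by rewrite /sg sD1.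
  + by move=> a b Ha Hb; rewrite /sg sDB; apply: h3.
  + by move=> a b Ha Hb; rewrite /sg sDM; apply: h4.
  + by move=> a Ha; rewrite /sg sDV; apply: h5.
- by move=> x y _ _; apply: sDD.
- by move=> a x _; apply: sD_epsZ.
- by move=> x y _ _; apply: sDM.
- by move=> x _; apply: sDK.
Qed.

Theorem mainTheorem1 (k : fieldType) (L : lmodType k) (br : L -> L -> L)
    (star : L -> L) (U : algType k) (iota : L -> U)
    (Sn : nat -> pzRingType) (phi : forall n, {poly U} -> Sn n)
    (rho : forall n, Sn n.+1 -> Sn n) (S : pzRingType) (pi : forall n, S -> Sn n)
    (theta : {poly U} -> S) (D : unitRingType) (j : S -> D) (eps : U -> D) :
  is_lie_bracket br -> lie_involution br star ->
  is_UEA br iota ->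
  lichtman_data iota phi rho pi theta j eps ->
  (exists tau : U -> U,
     [/\ alg_involution tau, (forall x, tau (iota x) = iota (star x)),
         (forall tau' : U -> U, alg_involution tau' ->
            (forall x, tau' (iota x) = iota (star x)) -> forall u, tau' u = tau u) &
         exists sigma : D -> D,
           divring_involution eps (gen_divring (fun d => exists u, d = eps u)) sigma /\
           forall u, sigma (eps u) = eps (tau u)])
  /\
  (exists sigma : D -> D,
     divring_involution eps (gen_divring (fun d => exists u, d = eps u)) sigma /\
     forall x, sigma (eps (iota x)) = eps (iota (- x))).
Proof.
move=> Hbr Hstar HU Hld; split.
  exact: (main_gen _ _ _ _ _ _ _ _ _ _ _ _ _ _ _ Hbr Hstar HU Hld).
have [tau [tI ti tu [sg [Hs Hse]]]] :=
  main_gen _ _ _ _ _ _ _ _ _ _ _ _ _ _ _ Hbr (opp_inv _ _ _ Hbr) HU Hld.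
by exists sg; split => // x; rewrite Hse ti.
Qed.
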